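(* Let $N\ge 1$ users and a server run the LightSecAgg protocol described in the context, with integer parameters $T\ge 0$ (privacy guarantee) and $D\ge 0$ (dropout-resiliency guarantee) satisfying $T+D<N$, and with the design parameter $U$ being any integer with $T<U\le N-D$. Then LightSecAgg simultaneously achieves (1) privacy against any set of up to $T$ colluding users (who may also collude with the server), and (2) dropout-resiliency against any set of up to $D$ dropped users, in the sense defined in the context.
   Context: Setting: there are $N$ users, indexed by $[N]=\{1,\dots,N\}$, and a server. User $i$ holds a local model $\mathbf{x}_i\in\mathbb{F}_q^d$ for a finite field $\mathbb{F}_q$; the $\mathbf{x}_i$ are independent of all randomness generated by the protocol. Users communicate with each other through private, authenticated channels (the server does not see user-to-user messages). Assume $U-T$ divides $d$. A matrix $W\in\mathbb{F}_q^{U\times N}$ is MDS if every $U\times U$ submatrix is invertible; it is $T$-private MDS if in addition the submatrix consisting of its rows $U-T+1,\dots,U$ is MDS (every $T\times T$ submatrix of it is invertible). Such matrices exist for all $U,N,T$ (for $q$ large enough). Let $W_j$ denote the $j$-th column of a fixed $T$-private MDS matrix $W$. LightSecAgg protocol with parameters $T,D,U$ ($N-D\ge U>T\ge0$): (i) Offline encoding and sharing of masks: each user $i$ independently picks $\mathbf{z}_i$ uniformly at random from $\mathbb{F}_q^d$, partitions it into $U-T$ sub-masks $[\mathbf{z}_i]_1,\dots,[\mathbf{z}_i]_{U-T}\in\mathbb{F}_q^{d/(U-T)}$, picks $[\mathbf{n}_i]_{U-T+1},\dots,[\mathbf{n}_i]_U$ independently and uniformly at random from $\mathbb{F}_q^{d/(U-T)}$,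 and computes for each $j\in[N]$ the encoded mask $[\tilde{\mathbf{z}}_i]_j=([\mathbf{z}_i]_1,\dots,[\mathbf{z}_i]_{U-T},[\mathbf{n}_i]_{U-T+1},\dots,[\mathbf{n}_i]_U)\cdot W_j$ (each coordinate of the vectors combined linearly with the entries of $W_j$). User $i$ sends $[\tilde{\mathbf{z}}_i]_j$ to user $j$ for each $j\ne i$. (ii) Masking and uploading: each user $i$ sends $\tilde{\mathbf{x}}_i=\mathbf{x}_i+\mathbf{z}_i$ to the server. The server identifies the set $\mathcal{U}_1\subseteq[N]$ of users whose masked models it received (surviving users). (iii) One-shot aggregate-model recovery: each surviving user $j\in\mathcal{U}_1$ sends $\sum_{i\in\mathcal{U}_1}[\tilde{\mathbf{z}}_i]_j$ to the server; after receiving any $U$ of these messages, the server decodes (using $W$) $\sum_{i\in\mathcal{U}_1}[\mathbf{z}_i]_k$ for $k\in[U-T]$, concatenates them into $\sum_{i\in\mathcal{U}_1}\mathbf{z}_i$, and outputs $\sum_{i\in\mathcal{U}_1}\tilde{\mathbf{x}}_i-\sum_{i\in\mathcal{U}_1}\mathbf{z}_i$. Privacy guarantee $T$: for every set $\mathcal{T}\subseteq[N]$ with $|\mathcal{T}|\le T$, $I\big(\{\mathbf{x}_i\}_{i\in[N]};\mathbf{Y}\,\big|\,\sum_{i\in\mathcal{U}_1}\mathbf{x}_i,\mathbf{Z}_{\mathcal{T}}\big)=0$, where $\mathbf{Y}$ is the collection of all messages received by the server (in the worst case where users deemed dropped are merely delayed, so the server receives all masked models), and $\mathbf{Z}_{\mathcal{T}}$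 is the collection of all information held by the users in $\mathcal{T}$ (their models, masks and received encoded masks). Dropout-resiliency guarantee $D$: if at most $D$ users drop at any point during execution, the server correctly recovers $\sum_{i\in\mathcal{U}_1}\mathbf{x}_i$, the sum of the surviving users' models. *)

(* Defs.v *)
From HB Require Import structures.
From mathcomp Require Import all_boot all_order all_algebra.
From mathcomp Require Import reals exp.
Set Implicit Arguments. Unset Strict Implicit. Unset Printing Implicit Defensive.
Import Order.TTheory GRing.Theory Num.Theory.
Local Open Scope ring_scope.

Section Info.
Variables (R : realType) (Om : finType) (p : Om -> R).

Definition Pr (E : pred Om) : R := \sum_(w | E w) p w.

(* Conditional mutual information
     I(X;Y|Z) = E[ log ( p(x,y,z) p(z) / (p(x,z) p(y,z)) ) ]
   (natural logarithm; sample points of probability 0 contribute 0). *)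
Definition cond_mutual_info (A B C : eqType)
  (X : Om -> A) (Y : Om -> B) (Z : Om -> C) : R :=
  \sum_(w : Om) p w *
    ln ( (Pr (fun v => [&& X v == X w, Y v == Y w & Z v == Z w])
          * Pr (fun v => Z v == Z w))
       / (Pr (fun v => (X v == X w) && (Z v == Z w))
          * Pr (fun v => (Y v == Y w) && (Z v == Z w))) ).
End Info.

(* the k-th row (k a natural number) of a matrix, 0 if k is out of range *)
Definition nrow (F : nzRingType) (r c : nat) (A : 'M[F]_(r, c)) (k : nat) : 'rV[F]_c :=
  \sum_(i < r | val i == k) row i A.

Definition MDS (F : fieldType) (r n : nat) (A : 'M[F]_(r, n)) : Prop :=
  forall f : 'I_r -> 'I_n, injective f -> colsub f A \in unitmx.

(* the last T rows (rows U-T+1..U in 1-based numbering) of W *)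
Definition bottom_rows (F : fieldType) (U N : nat) (T : nat) (W : 'M[F]_(U, N))
  : 'M[F]_(T, N) := \matrix_(a < T) nrow W (U - T + a).

Definition T_private_MDS (F : fieldType) (U N : nat) (T : nat) (W : 'M[F]_(U, N))
  : Prop := MDS W /\ MDS (bottom_rows T W).

(*   d = (U-T) * m ; a vector z in F^d is partitioned into U-T         *)
(*   sub-masks of length m: [z]_k = row k (vec_mx z), k < U-T.         *)
Section LightSecAgg.
Variables (F : finFieldType) (U N T m : nat) (W : 'M[F]_(U, N)).

Local Notation vec := 'rV[F]_((U - T) * m).
Definition models_t := {ffun 'I_N -> vec}.
(* private randomness of user i: mask z_i and noise [n_i]_{U-T+1..U}
   (the a-th row of the noise matrix is [n_i]_{U-T+1+a}) *)
Definition rnd_t := {ffun 'I_N -> (vec * 'M[F]_(T, m))%type}.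
Definition omega_t := (models_t * rnd_t)%type.

(* k-th entry (k < U) of ([z]_1,...,[z]_{U-T},[n]_{U-T+1},...,[n]_U) *)
Definition coef (zn : vec * 'M[F]_(T, m)) (k : nat) : 'rV[F]_m :=
  if (k < U - T)%N then nrow (vec_mx zn.1) k else nrow zn.2 (k - (U - T)).

(* encoded mask [z~_i]_j sent from user i to user j *)
Definition enc_mask (r : rnd_t) (i j : 'I_N) : 'rV[F]_m :=
  \sum_(k < U) W k j *: coef (r i) k.

Definition masked (x : models_t) (r : rnd_t) (i : 'I_N) : vec := x i + (r i).1.

(* message of surviving user j in phase (iii) *)
Definition agg_share (U1 : {set 'I_N}) (r : rnd_t) (j : 'I_N) : 'rV[F]_m :=
  \sum_(i in U1) enc_mask r i j.

(* server decoding from the messages of a set S of (U) users: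
   solve the linear system given by the columns of W indexed by S for
   the aggregated coefficient vector, keep its first U-T entries,
   concatenate them and subtract from the sum of masked models. *)
Definition server_output (U1 S : {set 'I_N}) (xt : 'I_N -> vec)
    (resp : 'I_N -> 'rV[F]_m) : vec :=
  match [pick A : 'M[F]_(U, m) |
           [forall j in S, \sum_(k < U) W k j *: row k A == resp j]] with
  | Some A => \sum_(i in U1) xt i
              - mxvec (\matrix_(k < U - T) row (widen_ord (leq_subr T U) k) A)
  | None => 0
  end.

Definition all_models (w : omega_t) : models_t := w.1.

Definition sum_models (U1 : {set 'I_N}) (w : omega_t) : vec := \sum_(i in U1) w.1 i.

(* everything received by the server (all masked models, and the phase
   (iii) messages of the users in U1) *)
Definition server_view (U1 : {set 'I_N}) (w : omega_t) :=
  ([ffun i => masked w.1 w.2 i],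
   [ffun j => if j \in U1 then Some (agg_share U1 w.2 j) else None]
     : {ffun 'I_N -> option 'rV[F]_m}).

(* everything held by the colluding users in Tc: model, mask, noise and
   all received encoded masks *)
Definition colluders_view (Tc : {set 'I_N}) (w : omega_t) :
  {ffun 'I_N -> option (vec * (vec * 'M[F]_(T, m)) * {ffun 'I_N -> 'rV[F]_m})} :=
  [ffun i => if i \in Tc then Some (w.1 i, w.2 i, [ffun j => enc_mask w.2 j i])
             else None].

(* joint law: models with arbitrary law Px, independent of the uniform
   protocol randomness *)
Definition lsa_prob (R : realType) (Px : models_t -> R) (w : omega_t) : R :=
  Px w.1 / #|{: rnd_t}|%:R.

Definition privacy_guarantee (Tp : nat) : Prop :=
  forall (R : realType) (Px : {ffun models_t -> R}),
    (forall x, 0 <= Px x) -> \sum_x Px x = 1 ->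
    forall Tc U1 : {set 'I_N}, (#|Tc| <= Tp)%N ->
      cond_mutual_info (lsa_prob Px) all_models (server_view U1)
        (fun w => (sum_models U1 w, colluders_view Tc w)) = 0.

(* U1: users whose masked model reached the server; U2 (subset of U1):
   users whose phase-(iii) message reached the server. At most D users
   drop in total. *)
Definition dropout_guarantee (D : nat) : Prop :=
  forall (x : models_t) (r : rnd_t) (U1 U2 : {set 'I_N}),
    (N - D <= #|U1|)%N -> U2 \subset U1 -> (N - D <= #|U2|)%N ->
    (U <= #|U2|)%N /\
    forall S : {set 'I_N}, S \subset U2 -> #|S| = U :> nat ->
      server_output U1 S (masked x r) (agg_share U1 r) = \sum_(i in U1) x i.

End LightSecAgg.

(* Main.v *)
Require Import Defs.
From HB Require Import structures.
From mathcomp Require Import all_boot all_order all_algebra.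
From mathcomp Require Import reals exp.
From mathcomp Require Import ring zify.
Set Implicit Arguments. Unset Strict Implicit. Unset Printing Implicit Defensive.
Import Order.TTheory GRing.Theory Num.Theory.
Local Open Scope ring_scope.

Lemma sum_const_pred (R : realType) (I : finType) (Q : pred I) (c : R) :
  \sum_(r | Q r) c = c * \sum_(r | Q r) 1.
Proof. by rewrite mulr_sumr; apply: eq_bigr => *; rewrite mulr1. Qed.

Lemma cmi_zero (R : realType) (X Rn : finType) (B C : eqType) (P : X -> R) (K : R)
  (Y : X * Rn -> B) (Z : X * Rn -> C) :
  (forall x r x' r', Z (x,r) = Z (x',r') -> exists phi : Rn -> Rn, injective phi /\
     forall s, Y (x,s) = Y (x', phi s) /\ Z (x,s) = Z (x', phi s)) ->
  cond_mutual_info (fun w => P w.1 * K) fst Y Z = 0.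
Proof.
move=> H; rewrite /cond_mutual_info; apply: big1 => -[x0 r0] _ /=.
set y0 := Y (x0, r0); set z0 := Z (x0, r0).
pose gZ x := \sum_(r | Z (x,r) == z0) (1:R).
pose gYZ x := \sum_(r | (Y (x,r) == y0) && (Z (x,r) == z0)) (1:R).
have split2 (E : pred (X * Rn)) : Pr (fun w => P w.1 * K) E =
    \sum_x (P x * K) * \sum_(r | E (x, r)) 1.
  rewrite /Pr; transitivity (\sum_(p | xpredT p.1 && E (p.1, p.2)) P p.1 * K).
    by apply: eq_bigl => -[].
  rewrite -(pair_big_dep xpredT (fun x r => E (x, r)) (fun x r => P x * K)) /=.
  by apply: eq_bigr => x _; rewrite sum_const_pred.
have single (E : pred (X * Rn)) : (forall x r, E (x, r) -> x = x0) ->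
    Pr (fun w => P w.1 * K) E = P x0 * K * \sum_(r | E (x0, r)) 1.
  move=> HE; rewrite split2 (bigD1 x0) //=.
  rewrite [X in _ + X]big1 ?addr0 // => x /eqP nx.
  rewrite big_pred0 ?mulr0 // => r; apply/negP => /HE.
  by move/nx.
have key x : gZ x * gYZ x0 = gYZ x * gZ x0.
  case: (boolP [exists r, Z (x, r) == z0]) => [/existsP [r1 /eqP e1]|].
    have [phi [iphi hphi]] := H _ _ _ _ e1.
    have -> : gZ x = gZ x0.
      rewrite /gZ [RHS](reindex_inj iphi) /=; apply: eq_bigl => s.
      by rewrite (hphi s).2.
    have -> : gYZ x = gYZ x0.
      rewrite /gYZ [RHS](reindex_inj iphi) /=; apply: eq_bigl => s.
      by rewrite (hphi s).2 (hphi s).1.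
    by rewrite mulrC.
  rewrite negb_exists => /forallP hn.
  have -> : gZ x = 0 by rewrite /gZ big_pred0 // => r; exact: negbTE (hn r).
  have -> : gYZ x = 0.
    by rewrite /gYZ big_pred0 // => r; rewrite (negbTE (hn r)) andbF.
  by rewrite !mul0r.
have eq : Pr (fun w => P w.1 * K)
        (fun v => [&& v.1 == x0, Y v == y0 & Z v == z0]) *
      Pr (fun w => P w.1 * K) (fun v => Z v == z0) =
      Pr (fun w => P w.1 * K) (fun v => (v.1 == x0) && (Z v == z0)) *
      Pr (fun w => P w.1 * K) (fun v => (Y v == y0) && (Z v == z0)).
  rewrite (single (fun v => [&& v.1 == x0, Y v == y0 & Z v == z0])); last first.
    by move=> x r /andP [/eqP].
  rewrite (single (fun v => (v.1 == x0) && (Z v == z0))); last first.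
    by move=> x r /andP [/eqP].
  rewrite !split2 /=.
  have gen (p0 a c : R) (F G : X -> R) : (forall x, F x * a = G x * c) ->
      p0 * a * \sum_x F x = p0 * c * \sum_x G x.
    move=> hFG; rewrite -!mulrA; congr (_ * _).
    rewrite mulrC [RHS]mulrC !mulr_suml; apply: eq_bigr => x _; exact: hFG.
  apply: gen => x; rewrite eqxx /=.
  have := key x; rewrite /gZ /gYZ => kx.
  by rewrite -[LHS]mulrA kx mulrA.
rewrite eq.
set a := (X in X / X).
have [->|a0] := eqVneq a 0; first by rewrite mul0r ln0 ?mulr0.
by rewrite divff // ln1 mulr0.
Qed.

Lemma extend_set (I : finType) (A : {set I}) k : (#|A| <= k <= #|I|)%N ->
  exists S : {set I}, A \subset S /\ #|S| = k.
Proof.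
move=> /andP [h1 h2]; move: {2}(k - #|A|)%N (erefl (k - #|A|)%N) => d.
elim: d A h1 => [|d IH] A h1 hd.
  by exists A; split => //; apply/eqP; rewrite eqn_leq h1; lia.
have : (0 < #|~: A|)%N by rewrite cardsCs setCK; lia.
case/card_gt0P => x; rewrite in_setC => xA.
have cx : #|x |: A| = #|A|.+1 by rewrite cardsU1 xA.
have [S [sS cS]] := IH (x |: A) ltac:(lia) ltac:(lia).
by exists S; split => //; apply: subset_trans sS; apply: subsetUr.
Qed.

Lemma enum_fun (I : finType) (S : {set I}) k : #|S| = k ->
  exists f : 'I_k -> I, [/\ injective f, forall b, f b \in S &
     forall t, t \in S -> exists b, f b = t].
Proof.
move=> hS; exists (fun b => enum_val (cast_ord (esym hS) b)); split.
- by move=> b1 b2 /enum_val_inj /cast_ord_inj.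
- by move=> b; apply: enum_valP.
- move=> t ht; exists (cast_ord hS (enum_rank_in ht t)).
  by rewrite cast_ordK enum_rankK_in.
Qed.

Section Conc.
Variables (F : finFieldType) (U N T m : nat) (W : 'M[F]_(U, N)).
Local Notation vec := 'rV[F]_((U - T) * m).

Definition Ez (z : vec) (t : 'I_N) : 'rV[F]_m :=
  \sum_(k < U) W k t *: (if (k < U - T)%N then nrow (vec_mx z) k else 0).
Definition En (n : 'M[F]_(T, m)) (t : 'I_N) : 'rV[F]_m :=
  \sum_(k < U) W k t *: (if (k < U - T)%N then 0 else nrow n (k - (U - T))).

Lemma nrowD r c (A B : 'M[F]_(r,c)) k : nrow (A + B) k = nrow A k + nrow B k.
Proof. by rewrite /nrow -big_split /=; apply: eq_bigr => i _; rewrite raddfD. Qed.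

Lemma nrow0 r c k : nrow (0 : 'M[F]_(r,c)) k = 0.
Proof. by rewrite /nrow big1 // => i _; rewrite row0. Qed.

Lemma nrow_ord r c (A : 'M[F]_(r,c)) (i : 'I_r) : nrow A i = row i A.
Proof. by rewrite /nrow (big_pred1 i) // => j /=; rewrite -val_eqE. Qed.

Lemma EzD z1 z2 t : Ez (z1 + z2) t = Ez z1 t + Ez z2 t.
Proof.
rewrite /Ez -big_split /=; apply: eq_bigr => k _; rewrite -scalerDr; congr (_ *: _).
by case: ifP; rewrite ?addr0 // raddfD nrowD.
Qed.

Lemma Ez0 t : Ez 0 t = 0.
Proof. by rewrite /Ez big1 // => k _; case: ifP; rewrite ?scaler0 // raddf0 nrow0 scaler0. Qed.

Lemma EnD n1 n2 t : En (n1 + n2) t = En n1 t + En n2 t.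
Proof.
rewrite /En -big_split /=; apply: eq_bigr => k _; rewrite -scalerDr; congr (_ *: _).
by case: ifP; rewrite ?addr0 // nrowD.
Qed.

Lemma En0 t : En 0 t = 0.
Proof. by rewrite /En big1 // => k _; case: ifP; rewrite ?scaler0 // nrow0 scaler0. Qed.

Lemma EzN z t : Ez (- z) t = - Ez z t.
Proof. by apply/eqP; rewrite -addr_eq0 -EzD addNr Ez0. Qed.

Lemma Ez_sum (A : {set 'I_N}) (G : 'I_N -> vec) t :
  Ez (\sum_(i in A) G i) t = \sum_(i in A) Ez (G i) t.
Proof. exact: (big_morph (fun z => Ez z t) (fun a b => EzD a b t) (Ez0 t)). Qed.

Lemma En_sum (A : {set 'I_N}) (G : 'I_N -> 'M[F]_(T, m)) t :
  En (\sum_(i in A) G i) t = \sum_(i in A) En (G i) t.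
Proof. exact: (big_morph (fun z => En z t) (fun a b => EnD a b t) (En0 t)). Qed.

Lemma enc_split (r : rnd_t F U N T m) i j :
  enc_mask W r i j = Ez (r i).1 j + En (r i).2 j.
Proof.
rewrite /enc_mask /Ez /En -big_split /=; apply: eq_bigr => k _; rewrite -scalerDr /coef.
by case: ifP; rewrite ?addr0 ?add0r.
Qed.

Lemma En_bottom n t :
  En n t = \sum_(a < T) bottom_rows T W a t *: row a n.
Proof.
have hb a : bottom_rows T W a t = \sum_(k < U | val k == (U - T + a)%N) W k t.
  by rewrite /bottom_rows mxE /nrow summxE; apply: eq_bigr => k _; rewrite mxE.
under [RHS]eq_bigr do rewrite hb scaler_suml.
rewrite /En.
under [LHS]eq_bigr => k _ do rewrite (fun_if (fun v => W k t *: v)) scaler0 /nrow scaler_sumr.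
rewrite (exchange_big_dep xpredT) //=.
apply: eq_bigr => k _; case: ifP => h.
  by rewrite big_pred0 // => i; apply/negP => /eqP; lia.
by apply: eq_bigl => i; apply/eqP/eqP; move/negbT: h; lia.
Qed.

Section Lmap.
Variable f : 'I_T -> 'I_N.
Let M := colsub f (bottom_rows T W).
Definition cmat (d : vec) : 'M[F]_(T, m) := \matrix_(b < T) Ez d (f b).
Definition Lm (d : vec) : 'M[F]_(T, m) := invmx (M^T) *m cmat d.

Lemma LmD d1 d2 : Lm (d1 + d2) = Lm d1 + Lm d2.
Proof.
rewrite /Lm -mulmxDr; congr (_ *m _); apply/row_matrixP => b.
by rewrite raddfD /= !rowK EzD.
Qed.

Lemma Lm0 : Lm 0 = 0.
Proof.
rewrite /Lm; have -> : cmat 0 = 0.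
  by apply/row_matrixP => b; rewrite rowK row0 Ez0.
by rewrite mulmx0.
Qed.

Lemma Lm_sum (A : {set 'I_N}) (G : 'I_N -> vec) :
  Lm (\sum_(i in A) G i) = \sum_(i in A) Lm (G i).
Proof. exact: (big_morph Lm LmD Lm0). Qed.

Lemma En_row n b : En n (f b) = row b (M^T *m n).
Proof.
rewrite En_bottom row_mul mulmx_sum_row; apply: eq_bigr => a _.
by rewrite !mxE.
Qed.

Lemma En_Lm d b : M \in unitmx -> En (Lm d) (f b) = Ez d (f b).
Proof.
move=> uM; rewrite En_row /Lm mulKVmx ?unitmx_tr // rowK //.
Qed.
End Lmap.

Lemma privacy_part : (T < N)%N -> MDS (bottom_rows T W) -> privacy_guarantee T m W T.
Proof.
move=> hTN hB R Px _ _ Tc U1 hTc.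
have [S [sTS cS]] := extend_set (A := Tc) (k := T) ltac:(rewrite card_ord; lia).
have [f [finj _ fon]] := enum_fun cS.
have uM := hB f finj.
rewrite /lsa_prob /all_models.
apply: (@cmi_zero _ _ _ _ _ (fun x => Px x) (#|{: rnd_t F U N T m}|%:R)^-1).
move=> x r x' r' /= hZ.
case: hZ; rewrite /sum_models /= => hsum /ffunP hC.
have hTx i : i \in Tc -> x i = x' i.
  move=> Hi; have := hC i; rewrite /colluders_view /= !ffunE Hi.
  by case.
pose d i := x' i - x i.
have d0 i : i \in Tc -> d i = 0 by move=> Hi; rewrite /d hTx // subrr.
have dsum : \sum_(i in U1) d i = 0 by rewrite /d sumrB hsum subrr.
pose phi (s : rnd_t F U N T m) : rnd_t F U N T m :=
  [ffun i => ((s i).1 - d i, (s i).2 + Lm f (d i))].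
have encphi s j i : enc_mask W (phi s) j i =
    enc_mask W s j i + (En (Lm f (d j)) i - Ez (d j) i).
  rewrite !enc_split /phi !ffunE /= EzD EzN EnD.
  by rewrite addrACA [- _ + _]addrC.
exists phi; split.
  move=> s1 s2 /ffunP h; apply/ffunP => i; move: (h i); rewrite !ffunE.
  case=> /addIr h1 /addIr h2.
  by rewrite [s1 i]surjective_pairing [s2 i]surjective_pairing h1 h2.
move=> s; split.
  rewrite /server_view /=; congr (_, _); apply/ffunP => i; rewrite !ffunE.
    rewrite /masked /phi ffunE /= /d.
    by rewrite opprB addrCA [x' i + _]addrCA subrr addr0 addrC.
  case: ifP => // _; congr Some; rewrite /agg_share.
  under [RHS]eq_bigr do rewrite encphi.
  rewrite big_split /= sumrB -(En_sum U1 (fun j => Lm f (d j))) -(Lm_sum f U1 d).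
  by rewrite -(Ez_sum U1 d) dsum Lm0 En0 Ez0 subrr addr0.
rewrite /sum_models /= hsum; congr (_, _); apply/ffunP => i.
rewrite /colluders_view !ffunE /=; case: ifP => // Hi.
have [b fb] := fon i (subsetP sTS i Hi).
congr Some; congr (_, _, _).
- by rewrite hTx.
- by rewrite d0 // Lm0 subr0 addr0 -surjective_pairing.
- apply/ffunP => j; rewrite !ffunE encphi -fb En_Lm // subrr addr0 //.
Qed.

Lemma dropout_part (D : nat) : (U <= N - D)%N -> (T <= U)%N -> MDS W ->
  dropout_guarantee T m W D.
Proof.
move=> hUND hTU hW x r U1 U2 hU1 hsub hU2; split; first by lia.
move=> S sS cS.
have [f [finj fS _]] := enum_fun cS.
have uW := hW f finj.
pose A0 : 'M[F]_(U, m) := \matrix_(k < U) \sum_(i in U1) coef (r i) k.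
have hA0 j : \sum_(k < U) W k j *: row k A0 = agg_share W U1 r j.
  rewrite /agg_share /enc_mask exchange_big /=; apply: eq_bigr => k _.
  by rewrite rowK scaler_sumr.
rewrite /server_output; case: pickP => [A /forallP hA | hnone]; last first.
  exfalso; move: (hnone A0) => /negP; apply; apply/forallP => j; apply/implyP => _.
  by rewrite hA0.
have -> : A = A0.
  have e : (colsub f W)^T *m A = (colsub f W)^T *m A0.
    apply/row_matrixP => b.
    have h1 (B : 'M_(U,m)) : row b ((colsub f W)^T *m B) = \sum_k W k (f b) *: row k B.
      by rewrite row_mul mulmx_sum_row; apply: eq_bigr => k _; rewrite !mxE.
    rewrite !h1 hA0.
    by have := hA (f b); rewrite fS /= => /eqP.
  have uWt : (colsub f W)^T \in unitmx by rewrite unitmx_tr.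
  by rewrite -(mulKmx uWt A) e mulKmx.
have -> : \matrix_k row (widen_ord (leq_subr T U) k) A0 = \sum_(i in U1) vec_mx (r i).1.
  apply/row_matrixP => k; rewrite rowK rowK raddf_sum /=; apply: eq_bigr => i _.
  rewrite /coef /= ltn_ord.
  by rewrite (nrow_ord (vec_mx (r i).1) k).
rewrite raddf_sum /=.
have -> : \sum_(i in U1) mxvec (vec_mx (r i).1) = \sum_(i in U1) (r i).1.
  by apply: eq_bigr => i _; rewrite vec_mxK.
by rewrite /masked big_split /= addrK.
Qed.

End Conc.

Theorem theorem1 (F : finFieldType) (N T D U m : nat) (W : 'M[F]_(U, N)) :
  (1 <= N)%N -> (T + D < N)%N -> (T < U)%N -> (U <= N - D)%N ->
  T_private_MDS T W ->
  privacy_guarantee T m W T /\ dropout_guarantee T m W D.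
Proof.
move=> _ hTD hTU hUND [hW hB]; split.
  by apply: privacy_part => //; lia.
by apply: dropout_part => //; lia.
Qed.
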